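(* Let $d\in\mathbb{N}$, $k\in\{1,\dots,d\}$, $\varepsilon>0$, and $\mathbf{e}_1,\mathbf{e}_2\in\mathbb{R}^d$. Define $$\psi_{sign}(\mathbf{e}_2):=\begin{cases}\max_{i\notin\mathrm{TopFeatures}(\mathbf{e}_1;k)}|e_{2i}| & (k<d),\\ 0 & (k=d),\end{cases}$$ and $$\ell_{\mathrm{Sgn}}(\mathbf{e}_2;\mathbf{e}_1,k):=\frac1k\sum_{i\in\mathrm{TopFeatures}(\mathbf{e}_1;k)}\max\big(0,\ \psi_{sign}(\mathbf{e}_2)-\mathrm{sign}(e_{1i})\,e_{2i}+\varepsilon\big).$$ Then $$1-\mathrm{SignAgree}(\mathbf{e}_1,\mathbf{e}_2;k)\le\varepsilon^{-1}\,\ell_{\mathrm{Sgn}}(\mathbf{e}_2;\mathbf{e}_1,k).$$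
   Context: $\mathrm{sign}(x):=1$ if $x\ge0$ and $-1$ otherwise. For $\mathbf{x}\in\mathbb{R}^d$, $\mathrm{rank}(\mathbf{x},i)$ denotes the position of index $i$ when indices are ordered by descending $|x_i|$, i.e. $|\{j\in[d]:|x_j|\ge|x_i|\}|$, with ties broken so that ranks form a permutation of $[d]$ (paper's convention: if $|x_i|=|x_j|$ with $i>j$ then $\mathrm{rank}(\mathbf{x},j)=\mathrm{rank}(\mathbf{x},i)+1$). $\mathrm{TopFeatures}(\mathbf{x};k):=\{i\in[d]:\mathrm{rank}(\mathbf{x},i)\le k\}$. The top-$k$ sign agreement is $\mathrm{SignAgree}(\mathbf{e}_1,\mathbf{e}_2;k):=\frac1k\big|\{i\in[d]: i\in\mathrm{TopFeatures}(\mathbf{e}_1;k)\wedge i\in\mathrm{TopFeatures}(\mathbf{e}_2;k)\wedge\mathrm{sign}(e_{1i})=\mathrm{sign}(e_{2i})\}\big|$. *)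

(* Defs.v *)
From mathcomp Require Import all_boot all_order all_algebra.
Set Implicit Arguments. Unset Strict Implicit. Unset Printing Implicit Defensive.
Import Order.TTheory GRing.Theory Num.Theory.
Local Open Scope ring_scope.

Section Defs.
Variables (R : realFieldType) (d : nat).

Definition sgn (x : R) : R := if 0 <= x then 1 else -1.

(* rank(x,i): number of j with |x_j| > |x_i|, plus number of ties j with j >= i
   (paper's convention: among ties, a larger index gets a smaller rank,
   i.e. |x_i| = |x_j|, i > j  ==>  rank(x,j) = rank(x,i) + 1). *)
Definition rank (x : 'I_d -> R) (i : 'I_d) : nat :=
  (#|[set j : 'I_d | (`|x i| < `|x j|)%R]|
   + #|[set j : 'I_d | ((`|x j| == `|x i|)%R) && (i <= j)%N]|)%N.

Definition TopFeatures (x : 'I_d -> R) (k : nat) : {set 'I_d} :=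
  [set i : 'I_d | (rank x i <= k)%N].

Definition SignAgree (e1 e2 : 'I_d -> R) (k : nat) : R :=
  (#|[set i : 'I_d | [&& i \in TopFeatures e1 k, i \in TopFeatures e2 k
                       & sgn (e1 i) == sgn (e2 i)]]|)%:R / k%:R.

Definition psi_sign (e1 e2 : 'I_d -> R) (k : nat) : R :=
  if (k < d)%N then \big[Num.max/0]_(i : 'I_d | i \notin TopFeatures e1 k) `|e2 i|
  else 0.

Definition loss_sgn (eps : R) (e1 e2 : 'I_d -> R) (k : nat) : R :=
  k%:R^-1 * \sum_(i in TopFeatures e1 k)
              Num.max 0 (psi_sign e1 e2 k - sgn (e1 i) * e2 i + eps).

End Defs.

(* Main.v *)
Require Import Defs.
From mathcomp Require Import all_boot all_order all_algebra.
Import Order.TTheory GRing.Theory Num.Theory.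
Local Open Scope ring_scope.
Set Implicit Arguments. Unset Strict Implicit.

Section Aux.
Variables (R : realFieldType) (d : nat) (x : 'I_d -> R).

Definition D (i : 'I_d) : {set 'I_d} :=
  [set l | (`|x i| < `|x l|) || ((`|x l| == `|x i|) && (i <= l)%N)].

Lemma rankD i : rank x i = #|D i|.
Proof.
rewrite /rank /D.
set A := [set j | _ < _]; set B := [set j | _ && _].
have -> : [set l | (`|x i| < `|x l|) || ((`|x l| == `|x i|) && (i <= l)%N)] = A :|: B.
  by apply/setP => l; rewrite !inE.
rewrite cardsU.
have -> : A :&: B = set0.
  apply/setP => l; rewrite !inE.
  by case: (ltgtP `|x i| `|x l|) => //= ->; rewrite eqxx.
by rewrite cards0 subn0.
Qed.

Lemma Dself i : i \in D i.
Proof. by rewrite inE eqxx leqnn orbT. Qed.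

Lemma Dtrans i j l : l \in D j -> j \in D i -> l \in D i.
Proof.
rewrite !inE => /orP[h1|/andP[/eqP h1 h1']] /orP[h2|/andP[/eqP h2 h2']].
- by rewrite (lt_trans h2 h1).
- by rewrite -h2 h1.
- by rewrite h1 h2.
- by rewrite h1 h2 eqxx (leq_trans h2' h1') orbT.
Qed.

Lemma Dtotal i j : (j \in D i) || (i \in D j).
Proof.
rewrite !inE; case: (ltgtP `|x i| `|x j|) => //= h.
exact: leq_total.
Qed.

Lemma Danti i j : j \in D i -> i \in D j -> i = j.
Proof.
rewrite !inE => /orP[h1|/andP[/eqP h1 h1']] /orP[h2|/andP[/eqP h2 h2']].
- by have := lt_trans h1 h2; rewrite ltxx.
- by move: h1; rewrite h2 ltxx.
- by move: h2; rewrite h1 ltxx.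
- by apply: val_inj; apply/eqP; rewrite eqn_leq h1' h2'.
Qed.

Lemma rank_inj : injective (rank x).
Proof.
move=> i j; rewrite !rankD => e; apply/eqP/negPn/negP => nij.
wlog h : i j e nij / j \in D i.
  move=> W; case/orP: (Dtotal i j) => h; first exact: W h.
  by apply: (W j i) => //; rewrite eq_sym.
have : D j \proper D i.
  apply/properP; split.
    by apply/subsetP => l hl; apply: Dtrans hl h.
  exists i; first exact: Dself.
  by apply/negP => hi; apply: (negP nij); apply/eqP; apply: Danti h hi.
by move/proper_card; rewrite e ltnn.
Qed.

Lemma rank_gt0 i : (0 < rank x i)%N.
Proof. by rewrite rankD card_gt0; apply/set0Pn; exists i; apply: Dself. Qed.

Lemma rank_le i : (rank x i <= d)%N.
Proof. by rewrite rankD; apply: leq_trans (max_card _) _; rewrite card_ord. Qed.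

Lemma rank_lt i : ((rank x i).-1 < d)%N.
Proof. by have := rank_le i; have := rank_gt0 i; case: (rank x i). Qed.

Definition f i : 'I_d := Ordinal (rank_lt i).

Lemma f_inj : injective f.
Proof.
move=> i j /(congr1 val) /= e; apply: rank_inj.
by rewrite -(prednK (rank_gt0 i)) -(prednK (rank_gt0 j)) e.
Qed.

Lemma card_top k : (k <= d)%N -> #|TopFeatures x k| = k.
Proof.
move=> hk.
have -> : TopFeatures x k = f @^-1: [set o : 'I_d | (o < k)%N].
  apply/setP => i; rewrite !inE /=.
  by have := rank_gt0 i; case: (rank x i).
rewrite card_preimset; last exact: f_inj.
have -> : [set o : 'I_d | (o < k)%N] = widen_ord hk @: setT.
  apply/setP => o; apply/idP/imsetP.
    rewrite inE => ho; exists (Ordinal ho) => //; exact: val_inj.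
  by case=> o' _ ->; rewrite inE /= ltn_ord.
rewrite card_imset ?cardsT ?card_ord //.
by move=> a b /(congr1 val) /= e; apply: val_inj.
Qed.

End Aux.

Lemma sgn_le_norm (R : realFieldType) (a b : R) : sgn a * b <= `|b|.
Proof.
rewrite /sgn; case: (0 <= a); first by rewrite mul1r ler_norm.
by rewrite mulN1r -normrN ler_norm.
Qed.

Theorem lemma3 (R : realFieldType) (d k : nat) (hk1 : (1 <= k)%N) (hkd : (k <= d)%N)
  (eps : R) (heps : 0 < eps) (e1 e2 : 'I_d -> R) :
  1 - SignAgree e1 e2 k <= eps^-1 * loss_sgn eps e1 e2 k.
Proof.
set T := TopFeatures e1 k.
set A := [set i : 'I_d | [&& i \in T, i \in TopFeatures e2 k
                       & sgn (e1 i) == sgn (e2 i)]].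
set psi := psi_sign e1 e2 k.
have psi_ge0 : 0 <= psi.
  rewrite /psi /psi_sign; case: (k < d)%N => //.
  by apply: (big_ind (fun y => 0 <= y)) => // a b ha hb; rewrite le_max ha.
have key : forall i, i \in T -> i \notin A -> sgn (e1 i) * e2 i <= psi.
  move=> i hT hA.
  move: hA; rewrite inE hT /=.
  case hT2: (i \in TopFeatures e2 k) => /= hs.
    apply: le_trans psi_ge0.
    move: hs; rewrite /sgn; case: (0 <= e1 i); case h2: (0 <= e2 i); rewrite ?eqxx //= => _.
      by rewrite mul1r; move/negbT: h2; rewrite -ltNge => /ltW.
    by rewrite mulN1r oppr_le0.
  have hr : (k < rank e2 i)%N by move: hT2; rewrite inE => /negbT; rewrite -ltnNge.
  case: (ltnP k d) => hkd'; last first.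
    by move: (rank_le e2 i); rewrite leqNgt (leq_ltn_trans hkd' hr).
  case: (boolP [exists j, (j \notin T) && (`|e2 i| <= `|e2 j|)]).
    move/existsP => [j /andP [hj hle]].
    apply: le_trans (sgn_le_norm _ _) _; apply: le_trans hle _.
    by rewrite /psi /psi_sign hkd' (bigD1 j) //= le_max lexx.
  move=> hn; exfalso.
  have sub : D e2 i \subset T.
    apply/subsetP => j hj; apply/negPn/negP => hjT; apply: (negP hn).
    apply/existsP; exists j; rewrite hjT /=.
    move: hj; rewrite inE => /orP [/ltW //|/andP [/eqP -> _] //].
  move: (subset_leq_card sub); rewrite -rankD card_top //.
  by rewrite leqNgt hr.
have hAT : A \subset T by apply/subsetP => i; rewrite inE => /and3P [].
have hcard : #|T :\: A| = (k - #|A|)%N.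
  have hT : #|T| = k by exact: card_top.
  by rewrite -{1}hT -(cardsID A T) (setIidPr hAT) addKn.
have hA : (#|A| <= k)%N.
  have hT : #|T| = k by exact: card_top.
  by rewrite -hT; exact: subset_leq_card.
have hsum : eps *+ (k - #|A|) <=
    \sum_(i in T) Num.max 0 (psi - sgn (e1 i) * e2 i + eps).
  rewrite (bigID (fun i => i \in A)) /= -[eps *+ _]add0r; apply: lerD.
    by apply: sumr_ge0 => i _; rewrite le_max lexx.
  rewrite -hcard -sumr_const.
  rewrite (eq_bigl (fun i => (i \in T) && (i \notin A))); last first.
    by move=> i; rewrite !inE andbC.
  apply: ler_sum => i /andP [hT hnA].
  rewrite le_max; apply/orP; right.
  by rewrite -lerBlDr subrr subr_ge0 key.
rewrite /SignAgree /loss_sgn -/T -/A -/psi.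
apply: le_trans (_ : k%:R^-1 * (k - #|A|)%:R <= _).
  by rewrite natrB // mulrBr mulVf ?pnatr_eq0 -?lt0n // mulrC lexx.
rewrite mulrA (mulrC eps^-1) -mulrA; apply: ler_wpM2l; first by rewrite invr_ge0 ler0n.
by rewrite ler_pdivlMl // mulr_natr.
Qed.
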